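(* Let $n\in\mathbb{N}$. (1) If $n$ is odd and $n\geq 3$, then the path $P_n$ is an $\mathcal{N}$ position for Grim. (2) If $n$ is even and $n\geq 4$, then the cycle $C_n$ is a $\mathcal{P}$ position. (3) If $n$ is odd and $n\geq 5$, then the wheel $W_n$ is an $\mathcal{N}$ position. (4) For every non-empty finite simple graph $G$, the disjoint union $G\cup G$ of two copies of $G$ is a $\mathcal{P}$ position.
   Context: Grim is a two-player game on a finite simple undirected graph. Any isolated vertices of the starting graph are deleted before play begins. Players alternate moves; a move consists of selecting a vertex of the current graph and deleting it together with all its incident edges, after which every vertex that has become isolated is also deleted. The player who makes the last legal move wins (a player facing the empty graph has no move and loses). A graph is an $\mathcal{N}$ position if the player about to move has a winning strategy, and a $\mathcal{P}$ position otherwise. $P_n$, $C_n$ denote the path and cycle on $n$ vertices; $W_n$ denotes the wheel on $n$ vertices, i.e. the cycle $C_{n-1}$ together with one extra vertex (the center) adjacent to all vertices of the cycle. *)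

(* Defs.v *)
From mathcomp Require Import all_boot.
Set Implicit Arguments. Unset Strict Implicit. Unset Printing Implicit Defensive.

(* A position of Grim is the induced
   subgraph on a set S : {set T} of surviving vertices (deleting a vertex
   deletes exactly its incident edges, so the current graph is always an
   induced subgraph of the starting one). *)

Definition simple_graph (T : finType) (e : rel T) : Prop :=
  symmetric e /\ irreflexive e.

Definition grim_clean (T : finType) (e : rel T) (S : {set T}) : {set T} :=
  [set x in S | [exists y in S, e x y]].

Definition grim_move (T : finType) (e : rel T) (S : {set T}) (v : T) : {set T} :=
  grim_clean e (S :\ v).

Definition grim_start (T : finType) (e : rel T) : {set T} := grim_clean e setT.

(* N positions (player to move wins) and P positions (player to move loses);
   last player to move wins, the empty graph is a P position. *)
Inductive grimN (T : finType) (e : rel T) : {set T} -> Prop :=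
  | grimN_I (S : {set T}) (v : T) : v \in S -> grimP e (grim_move e S v) -> grimN e S
with grimP (T : finType) (e : rel T) : {set T} -> Prop :=
  | grimP_I (S : {set T}) : (forall v : T, v \in S -> grimN e (grim_move e S v)) -> grimP e S.

Definition is_N (T : finType) (e : rel T) : Prop := grimN e (grim_start e).
Definition is_P (T : finType) (e : rel T) : Prop := grimP e (grim_start e).

Definition path_rel (n : nat) : rel 'I_n :=
  fun i j => (i.+1 == j :> nat) || (j.+1 == i :> nat).
Arguments path_rel n : clear implicits.

Definition cycle_rel (n : nat) : rel 'I_n :=
  fun i j => (i.+1 %% n == j :> nat) || (j.+1 %% n == i :> nat).
Arguments cycle_rel n : clear implicits.

(* Wheel W_n: cycle C_(n-1) on Some 0..Some (n-2), plus center None. *)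
Definition wheel_rel (n : nat) : rel (option 'I_n.-1) :=
  fun x y => match x, y with
             | None, None => false
             | None, Some _ | Some _, None => true
             | Some i, Some j => cycle_rel n.-1 i j
             end.
Arguments wheel_rel n : clear implicits.

Definition dunion_rel (T : finType) (e : rel T) : rel (T + T) :=
  fun x y => match x, y with
             | inl a, inl b => e a b
             | inr a, inr b => e a b
             | _, _ => false
             end.

(* Main.v *)
Require Import Defs.
From mathcomp Require Import all_boot all_algebra.
From mathcomp Require Import ring zify.
Import GRing.Theory.

Lemma clean_clean (T : finType) (e : rel T) (sym : symmetric e) (A : {set T}) w :
  grim_clean e (grim_clean e A :\ w) = grim_clean e (A :\ w).
Proof.
apply/setP=> x; rewrite !inE.
apply/andP/andP => [[/andP[xw /andP[xA _]] /existsP[y /andP[]]]|[/andP[xw xA] /existsP[y /andP[]]]].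
- rewrite !inE => /andP[yw /andP[yA _]] exy; split; first by rewrite xw.
  by apply/existsP; exists y; rewrite !inE yw yA.
- rewrite !inE => /andP[yw yA] exy; split.
    by rewrite xw xA /=; apply/exists_inP; exists y.
  apply/exists_inP; exists y => //; rewrite !inE yw yA /=; apply/exists_inP; exists x => //.
  by rewrite sym.
Qed.

Lemma mirror (T : finType) (e : rel T) (sym : symmetric e) (s : T -> T)
  (inv : involutive s) (aut : forall x y, e (s x) (s y) = e x y) :
  forall A : {set T}, (forall x, x \in A -> s x \in A) ->
    (forall x, x \in A -> s x != x /\ ~~ e x (s x)) -> grimP e (grim_clean e A).
Proof.
move=> A; have [k] := ubnP #|A|; elim: k A => // k IH A ltAk Ainv Acond.
constructor => v vin; rewrite /grim_move clean_clean //.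
move: vin; rewrite inE => /andP[vA /existsP[y /andP[yA evy]]].
have [sv nadj] := Acond v vA.
apply: (@grimN_I _ _ _ (s v)).
  rewrite !inE sv Ainv //=; apply/existsP; exists (s y).
  rewrite !inE Ainv // aut evy !andbT.
  apply/eqP => syv; move: nadj; by rewrite -{2}syv inv evy.
rewrite /grim_move clean_clean //.
apply: IH.
- have h1 : #|A :\ v :\ s v| <= #|A :\ v|.
    by apply: subset_leq_card; apply/subsetP => z; rewrite inE => /andP[].
  have h2 : #|A| = #|A :\ v|.+1 by rewrite (cardsD1 v A) vA.
  lia.
- move=> x; rewrite !inE => /andP[xsv /andP[xv xA]].
  rewrite Ainv // andbT; apply/andP; split.
    apply/eqP => h; have := congr1 s h; rewrite !inv => hx; move: xv; by rewrite hx eqxx.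
  apply/eqP => h; move: xsv; by rewrite -h inv eqxx.
- move=> x; rewrite !inE => /andP[_ /andP[_ xA]]; exact: Acond.
Qed.

Definition swapLR (T : Type) (x : T + T) : T + T :=
  match x with inl a => inr a | inr a => inl a end.

Lemma part4 (T : finType) (e : rel T) : simple_graph e -> is_P (dunion_rel e).
Proof.
move=> [sym irr]; rewrite /is_P /grim_start.
apply: (@mirror _ _ _ (@swapLR T)).
- by case=> a [] b //=; rewrite sym.
- by case.
- by case=> a [] b.
- by move=> x; rewrite inE.
- by case=> a _.
Qed.

Lemma path_sym n : symmetric (path_rel n).
Proof. by move=> i j; rewrite /path_rel orbC. Qed.

Lemma path_aut n (i j : 'I_n) : path_rel n (rev_ord i) (rev_ord j) = path_rel n i j.
Proof.
rewrite /path_rel /=; have := ltn_ord i; have := ltn_ord j.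
move: (nat_of_ord i) (nat_of_ord j) => a b Ha Hb.
by apply/orP/orP; case=> /eqP H; [right|left|right|left]; apply/eqP; lia.
Qed.

Lemma part1 n : odd n -> 3 <= n -> is_N (path_rel n).
Proof.
move=> On n3.
have Hn : n = (n./2 * 2).+1 by rewrite -{1}(odd_double_half n) On -mul2n mulnC.
move: (n./2) Hn => j Hn; subst n.
have jlt : j < (j * 2).+1 by lia.
have j1lt : j.+1 < (j * 2).+1 by lia.
set m := Ordinal jlt.
rewrite /is_N /grim_start.
apply: (@grimN_I _ _ _ m).
  rewrite !inE /=; apply/exists_inP; exists (Ordinal j1lt) => //.
  by rewrite /path_rel /= eqxx.
rewrite /grim_move clean_clean; last exact: path_sym.
apply: (@mirror _ _ (@path_sym _) (@rev_ord _)).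
- exact: rev_ordK.
- exact: path_aut.
- move=> x; rewrite !inE !andbT => /eqP xm; apply/eqP => h; apply: xm.
  apply/val_inj; move/(congr1 val): h => /=; have := ltn_ord x; lia.
- move=> x; rewrite !inE !andbT => /eqP xm; split.
    apply/eqP => h; apply: xm; apply/val_inj; move/(congr1 val): h => /=.
    have := ltn_ord x; lia.
  rewrite /path_rel /=; have := ltn_ord x; move: (nat_of_ord x) => a Ha.
  apply/negP => /orP[] /eqP; lia.
Qed.

Section Cyc.
Local Open Scope ring_scope.
Variable j : nat.
Hypothesis j1 : (1 <= j)%N.
Local Notation k := (j * 2)%N.
Lemma ke : ~~ odd k.
Proof. by rewrite oddM andbF. Qed.

Lemma bridge (x y : 'I_(k.+2)) : (x.+1 %% k.+2 == y :> nat)%N = (x + 1 == y).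
Proof. by rewrite -val_eqE /= modnDmr addn1. Qed.

Lemma cyc_rel (x y : 'I_(k.+2)) : cycle_rel k.+2 x y = (x + 1 == y) || (y + 1 == x).
Proof. by rewrite /cycle_rel !bridge. Qed.

Lemma cyc_sym : symmetric (cycle_rel k.+2).
Proof. by move=> a b; rewrite /cycle_rel orbC. Qed.

Definition cs (v x : 'I_(k.+2)) : 'I_(k.+2) := v + v - x.

Lemma cs_inv v : involutive (cs v).
Proof. by move=> x; rewrite /cs; ring. Qed.

Lemma cs_aut1 v x y : (cs v x + 1 == cs v y) = (y + 1 == x).
Proof.
rewrite -subr_eq0 -(subr_eq0 (y + 1)).
have -> : cs v x + 1 - cs v y = y + 1 - x by rewrite /cs; ring.
done.
Qed.

Lemma cs_aut v x y : cycle_rel k.+2 (cs v x) (cs v y) = cycle_rel k.+2 x y.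
Proof. by rewrite !cyc_rel !cs_aut1 orbC. Qed.

Lemma val_add (a b : 'I_(k.+2)) : val (a + b) = (((a : nat) + b) %% k.+2)%N.
Proof. by []. Qed.

Lemma cs_noadj v x : ~~ cycle_rel k.+2 x (cs v x).
Proof.
have ev : odd k.+2 = false by rewrite /= negbK (negbTE ke).
rewrite cyc_rel /cs; apply/negP => /orP[] /eqP h.
  have h2 : x + x + 1 = v + v by rewrite -addrA h; ring.
  move/(congr1 (fun z => odd (val z))): h2.
  by rewrite !val_add !odd_mod // !oddD /= !odd_mod // ?oddD !addbb.
have h2 : v + v + 1 = x + x by rewrite -{1}h; ring.
move/(congr1 (fun z => odd (val z))): h2.
by rewrite !val_add !odd_mod // !oddD /= !odd_mod // ?oddD !addbb.
Qed.

Definition hh : 'I_(k.+2) := (j.+1)%:R.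

Lemma valh : val hh = j.+1.
Proof. rewrite /hh Zp_nat /= modn_small //; lia. Qed.

Lemma hh2 : hh + hh = 0.
Proof.
apply/val_inj; rewrite val_add valh /=.
have -> : (j.+1 + j.+1 = k.+2)%N by lia.
exact: modnn.
Qed.

Lemma cs_fix v x : cs v x = x -> x = v \/ x = v + hh.
Proof.
move=> h.
have e1 : x + x = v + v by rewrite -{1}h /cs; ring.
set d := x - v.
have dd : d + d = 0 by rewrite /d -[RHS](subrr (x + x)) {2}e1; ring.
have xd : x = v + d by rewrite /d; ring.
have H : (((d : nat) + d) %% k.+2 = 0)%N by move/(congr1 val): dd; rewrite val_add.
have : ((d : nat) = 0 \/ (d : nat) = j.+1)%N.
  have := ltn_ord d; move: H; move: (nat_of_ord d) => a H ad.
  have := divn_eq (a + a) k.+2; rewrite H addn0.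
  have q2 : ((a + a) %/ k.+2 < 2)%N by rewrite ltn_divLR //; lia.
  move: ((a + a) %/ k.+2)%N q2 => q; case: q => [|[|q]] //= _; lia.
case=> hd; [left|right]; rewrite xd.
  have -> : d = 0 by apply/val_inj; rewrite /=; exact: hd.
  by rewrite addr0.
by have -> : d = hh by apply/val_inj; rewrite valh; exact: hd.
Qed.

Lemma w_ne v : v + hh != v.
Proof.
apply/eqP => E; have : hh = 0 by rewrite -[hh](addKr v) E addNr.
by move/(congr1 val); rewrite valh.
Qed.

Lemma w1_ne v : v + hh + 1 != v.
Proof.
apply/eqP => E; have : hh + 1 = 0 by rewrite -[hh + 1](addKr v) (addrA v) E addNr.
move/(congr1 val); rewrite val_add valh /= [(1 %% _)%N]modn_small // modn_small; lia.
Qed.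

Lemma cs_w v : cs v (v + hh) = v + hh.
Proof.
have e : hh = - hh by apply/eqP; rewrite -addr_eq0 hh2.
rewrite /cs; transitivity (v - hh); first by ring.
by rewrite -e.
Qed.

Lemma cs_v v : cs v v = v.
Proof. rewrite /cs; ring. Qed.

Lemma cs_eq v x y : cs v x = y -> x = cs v y.
Proof. by move=> <-; rewrite cs_inv. Qed.

Lemma cyc_P : is_P (cycle_rel k.+2).
Proof.
constructor => v vin; rewrite /grim_move clean_clean; last exact: cyc_sym.
apply: (@grimN_I _ _ _ (v + hh)).
  rewrite !inE w_ne /=; apply/exists_inP; exists (v + hh + 1).
    by rewrite !inE w1_ne.
  by rewrite cyc_rel eqxx.
rewrite /grim_move clean_clean; last exact: cyc_sym.
apply: (@mirror _ _ cyc_sym (cs v) (@cs_inv v) (@cs_aut v)).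
- move=> x; rewrite !inE !andbT => /andP[xw xv]; apply/andP; split.
    apply/eqP => /cs_eq; rewrite cs_w => E; by rewrite E eqxx in xw.
  apply/eqP => /cs_eq; rewrite cs_v => E; by rewrite E eqxx in xv.
- move=> x; rewrite !inE !andbT => /andP[xw xv]; split; last exact: cs_noadj.
  apply/eqP => /cs_fix [] E; [by rewrite E eqxx in xv | by rewrite E eqxx in xw].
Qed.

Local Notation W := (wheel_rel k.+3).

Lemma wh_sym : symmetric W.
Proof. by case=> [a|] [b|] //=; rewrite cyc_sym. Qed.

Lemma wheel_N : is_N W.
Proof.
rewrite /is_N /grim_start.
apply: (@grimN_I _ _ _ None).
  rewrite !inE /=; apply/exists_inP; exists (Some 0) => //.
rewrite /grim_move clean_clean; last exact: wh_sym.
constructor => u; rewrite /grim_move clean_clean; last exact: wh_sym.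
case: u => [v|]; last by rewrite !inE.
move=> _.
apply: (@grimN_I _ _ _ (Some (v + hh))).
  rewrite !inE /= (inj_eq (@Some_inj _)) w_ne /=.
  apply/exists_inP; exists (Some (v + hh + 1)).
    by rewrite !inE /= (inj_eq (@Some_inj _)) w1_ne.
  by rewrite /= cyc_rel eqxx.
rewrite /grim_move clean_clean; last exact: wh_sym.
apply: (@mirror _ _ wh_sym (omap (cs v))).
- by case=> [a|] //=; rewrite cs_inv.
- by case=> [a|] [b|] //=; rewrite cs_aut.
- case=> [x|]; rewrite !inE ?andbT //= !(inj_eq (@Some_inj _)) => /andP[xw xv]; apply/andP; split.
    apply/eqP => /cs_eq; rewrite cs_w => E; by rewrite E eqxx in xw.
  apply/eqP => /cs_eq; rewrite cs_v => E; by rewrite E eqxx in xv.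
- case=> [x|]; rewrite !inE ?andbT //= !(inj_eq (@Some_inj _)) => /andP[xw xv]; split.
    rewrite /= ?(inj_eq (@Some_inj _)).
    apply/eqP => /cs_fix [] E; [by rewrite E eqxx in xv | by rewrite E eqxx in xw].
  exact: cs_noadj.
Qed.

End Cyc.

Theorem corollary4p4 :
  (forall n : nat, odd n -> 3 <= n -> is_N (path_rel n)) /\
  (forall n : nat, ~~ odd n -> 4 <= n -> is_P (cycle_rel n)) /\
  (forall n : nat, odd n -> 5 <= n -> is_N (wheel_rel n)) /\
  (forall (T : finType) (e : rel T),
      simple_graph e -> 0 < #|T| -> is_P (dunion_rel e)).
Proof.
split; first exact: part1.
split.
  move=> n On n4.
  have Hn : n = (n./2 * 2) by rewrite -{1}(odd_double_half n) (negbTE On) add0n -mul2n mulnC.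
  have [i [-> i1]] : exists i, n = (i * 2).+2 /\ 1 <= i by exists (n./2).-1; lia.
  exact: cyc_P.
split.
  move=> n On n5.
  have Hn : n = (n./2 * 2).+1 by rewrite -{1}(odd_double_half n) On -mul2n mulnC.
  have [i [-> i1]] : exists i, n = (i * 2).+3 /\ 1 <= i by exists (n./2).-1; lia.
  exact: wheel_N.
by move=> T e ge _; exact: part4.
Qed.
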